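(* In the tracking setting, fix $k\geq0$ and assume (i) $\|s_{k+1}-s_k\|_2<\min\big\{r_A,\ r_B,\ \frac{q_B\rho}{\lambda_A\lambda_F}\big\}$; (ii) $\|\bar w_k-w^\ast_k\|_2<q_B\rho$; (iii) $\big(1+\frac{\lambda_H\lambda_B}{\rho}\big)\|\bar w_k-w^\ast_k\|_2+\lambda_H\lambda_B\|s_{k+1}-s_k\|_2<\delta$. Then $$\|\bar w_{k+1}-w^\ast_{k+1}\|_2\leq\beta_w(\rho,M)\|\bar w_k-w^\ast_k\|_2+\beta_s(\rho,M)\|s_{k+1}-s_k\|_2,$$ where $$\beta_w(\rho,M):=C(1+\rho\lambda_G)\Big(1+\frac{\lambda_B\lambda_H}{\rho}\Big)M^{-\psi}+\frac{\lambda_B\lambda_H}{\rho},\qquad \beta_s(\rho,M):=C(1+\rho\lambda_G)\lambda_B\lambda_HM^{-\psi}+\frac{\lambda_B\lambda_H\lambda_A\lambda_F}{\rho}.$$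
   Context: Problem data: $z=(z_1,\dots,z_P)\in\mathbb{R}^{n_z}$; $\mathcal{Z}=\mathcal{Z}_1\times\cdots\times\mathcal{Z}_P$ a product of nonempty bounded boxes; $J(z)=\sum_iJ_i(z_i)$ with polynomials $J_i$; polynomial maps $Q_c:\mathbb{R}^{n_z}\to\mathbb{R}^m$, $g_i:\mathbb{R}^{n_i}\to\mathbb{R}^{q_i}$; $T_i\in\mathbb{R}^{q_i\times p}$; $q=\sum q_i$; $\mathcal{S}\subseteq\mathbb{R}^p$; $G(z,s)=(Q_c(z),g_1(z_1)+T_1s,\dots,g_P(z_P)+T_Ps)$; $L_\rho(z,\mu,s)=J(z)+(\mu+\frac\rho2G(z,s))^\top G(z,s)$; for $w=(z,\mu)$, $F(w,s)=(\nabla J(z)+\nabla_zG(z,s)^\top\mu,\ G(z,s))$; $\mathcal{N}:=\mathcal{N}_{\mathcal{Z}\times\mathbb{R}^{m+q}}$. A KKT point of $(P_s)$: $\min J(z)$ s.t. $G(z,s)=0$, $z\in\mathcal{Z}$, is $w$ with $0\in F(w,s)+\mathcal{N}(w)$. For a reference multiplier $\tilde\mu$: $H^{\tilde\mu}_\rho(w,d,s):=(\nabla J(z)+\nabla_zG(z,s)^\top\mu,\ G(z,s)+d+(\tilde\mu-\mu)/\rho)$. Constants: $\lambda_F:=P\max_i\|T_i\|_2$; $\lambda_H>0$ with $\|H^{\tilde\mu}_\rho(w,d,s)-H^{\tilde\mu}_\rho(w,d',s')\|\le\lambda_H\|(d,s)-(d',s')\|$ for all arguments; $\lambda_G>0$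 a Lipschitz constant of $z\mapsto G(z,s)$ on $\mathcal{Z}$ (independent of $s$). Primal sweep on $L_\rho(\cdot,\mu,s)$: block-coordinate projected-gradient pass over $i=1,\dots,P$ in order, each block update $z_i\leftarrow\pi_{\mathcal{Z}_i}(z_i-\frac1{c_i}\nabla_{z_i}L_\rho)$ (gradient evaluated with already updated preceding blocks) with curvature $c_i$ obtained by backtracking (multiply by $\beta>1$ from an initial $c_i^0>0$) until $f(u)+\frac{\alpha_i}2\|u-z_i\|^2\le f(z_i)+\nabla f(z_i)^\top(u-z_i)+\frac{c_i}2\|u-z_i\|^2$ for the block function $f$, with $\alpha_i>0$. Tracking setting: fix $\rho>0$, $M\ge1$. Given parameters $(s_k)_{k\ge0}\subset\mathcal{S}$ and KKT points $w^\ast_k=(z^\ast_k,\mu^\ast_k)$ of $(P_{s_k})$. Iterates $\bar w_k=(\bar z_k,\bar\mu_k)$ with $\bar z_k\in\mathcal{Z}$ are produced by: $\bar z_{k+1}$ = result of $M$ successive primal sweeps on $L_\rho(\cdot,\bar\mu_k,s_{k+1})$ started at $\bar z_k$; $\bar\mu_{k+1}=\bar\mu_k+\rho G(\bar z_{k+1},s_{k+1})$. Let $z^\infty_k$ be the limit of infinitely many sweeps on $L_\rho(\cdot,\bar\mu_k,s_{k+1})$ started at $\bar z_k$, and $w^\infty_k:=(z^\infty_k,\ \bar\mu_k+\rho G(z^\infty_k,s_{k+1}))$; $d_k:=(\bar\mu_k-\mu^\ast_k)/\rho$. Standing hypotheses, for every $k$: (A) there are constants $r_A,\delta_A,\lambda_A>0$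 (independent of $k$) such that for every $s\in\mathcal{B}(s_k,r_A)\cap\mathcal{S}$ there is a unique $w^\ast(s)\in\mathcal{B}(w^\ast_k,\delta_A)$ with $0\in F(w^\ast(s),s)+\mathcal{N}(w^\ast(s))$, for all $s,s'\in\mathcal{B}(s_k,r_A)\cap\mathcal{S}$ one has $\|w^\ast(s)-w^\ast(s')\|\le\lambda_A\|F(w^\ast(s'),s)-F(w^\ast(s'),s')\|$, and $w^\ast_{k+1}=w^\ast(s_{k+1})$ whenever $\|s_{k+1}-s_k\|<r_A$; (B) there are constants $r_B,q_B,\lambda_B>0$ and $\delta_B\ge\delta_A$ (independent of $k$) such that for all $d\in\mathcal{B}(0,q_B)$, $s\in\mathcal{B}(s_k,r_B)\cap\mathcal{S}$ there is a unique $w^\ast_k(d,s)\in\mathcal{B}(w^\ast_k,\delta_B)$ with $0\in H^{\mu^\ast_k}_\rho(w^\ast_k(d,s),d,s)+\mathcal{N}(w^\ast_k(d,s))$, and $\|w^\ast_k(d,s)-w^\ast_k(d',s')\|\le\lambda_B\|H^{\mu^\ast_k}_\rho(w^\ast_k(d',s'),d,s)-H^{\mu^\ast_k}_\rho(w^\ast_k(d',s'),d',s')\|$ for all such $d,d',s,s'$; (C) there are constants $C>0$, $\delta>0$, $\psi>0$ (independent of $k$) such that the sequence of sweeps defining $z^\infty_k$ converges, $w^\infty_k=w^\ast_k(d_k,s_{k+1})$ whenever $d_k\in\mathcal{B}(0,q_B)$ and $\|s_{k+1}-s_k\|<r_B$, and if $\|\bar z_k-z^\infty_k\|<\delta$ then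 $\|\bar z_{k+1}-z^\infty_k\|\le CM^{-\psi}\|\bar z_k-z^\infty_k\|$. (In the paper, $\psi=\psi(d_L,n_z)=1/(d_L(3d_L-3)^{n_z-1}-2)$ with $d_L$ the degree of the augmented Lagrangian.) *)

(* Defs.v *)
From Stdlib Require Import Reals Lra Lia.
Open Scope R_scope.

(** * Finite-dimensional vectors
    A vector of R^n is represented by a function [nat -> R]; only the
    coordinates [0 .. n-1] are meaningful.  All notions below (norms,
    equality [veq], sets, ...) only look at those coordinates. *)
Definition vec := nat -> R.

Fixpoint sumR (n : nat) (f : nat -> R) : R :=
  match n with O => 0 | S n' => sumR n' f + f n' end.

Fixpoint maxR (n : nat) (f : nat -> R) : R :=
  match n with O => 0 | S n' => Rmax (maxR n' f) (f n') end.

Definition vzero : vec := fun _ => 0.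
Definition vadd (x y : vec) : vec := fun i => x i + y i.
Definition vsub (x y : vec) : vec := fun i => x i - y i.
Definition vscal (a : R) (x : vec) : vec := fun i => a * x i.
Definition dot (n : nat) (x y : vec) : R := sumR n (fun i => x i * y i).
Definition norm (n : nat) (x : vec) : R := sqrt (dot n x x).
Definition veq (n : nat) (x y : vec) : Prop := forall i, (i < n)%nat -> x i = y i.
Definition upd (x : vec) (j : nat) (t : R) : vec :=
  fun i => if Nat.eqb i j then t else x i.

Definition pvec := (vec * vec)%type.
Definition psub (x y : pvec) : pvec := (vsub (fst x) (fst y), vsub (snd x) (snd y)).
Definition pdot (n1 n2 : nat) (x y : pvec) : R := dot n1 (fst x) (fst y) + dot n2 (snd x) (snd y).
Definition pnorm (n1 n2 : nat) (x : pvec) : R := sqrt (pdot n1 n2 x x).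
Definition pdist (n1 n2 : nat) (x y : pvec) : R := pnorm n1 n2 (psub x y).
Definition pveq (n1 n2 : nat) (x y : pvec) : Prop := veq n1 (fst x) (fst y) /\ veq n2 (snd x) (snd y).

Definition matvec (c : nat) (T : nat -> nat -> R) (s : vec) : vec :=
  fun r => sumR c (fun l => T r l * s l).

Definition is_opnorm (r c : nat) (T : nat -> nat -> R) (a : R) : Prop :=
  is_lub (fun v => exists x, norm c x <= 1 /\ v = norm r (matvec c T x)) a.

Inductive is_poly (n : nat) : (vec -> R) -> Prop :=
| poly_const (c : R) : is_poly n (fun _ => c)
| poly_var (j : nat) : (j < n)%nat -> is_poly n (fun x => x j)
| poly_add f g : is_poly n f -> is_poly n g -> is_poly n (fun x => f x + g x)
| poly_mul f g : is_poly n f -> is_poly n g -> is_poly n (fun x => f x * g x)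
| poly_ext f g : is_poly n f -> (forall x, f x = g x) -> is_poly n g.

Definition is_grad (n : nat) (f : vec -> R) (df : vec -> vec) : Prop :=
  forall x j, (j < n)%nat -> derivable_pt_lim (fun t => f (upd x j t)) (x j) (df x j).

(** Block structure: block i has size [sz i] and starts at [offn sz i]. *)
Fixpoint offn (sz : nat -> nat) (i : nat) : nat :=
  match i with O => O | S i' => (offn sz i' + sz i')%nat end.
Definition in_blk (sz : nat -> nat) (i j : nat) : bool :=
  Nat.leb (offn sz i) j && Nat.ltb j (offn sz (S i)).
Definition blk (sz : nat -> nat) (x : vec) (i : nat) : vec := fun j => x (offn sz i + j)%nat.
Definition set_blk (sz : nat -> nat) (x : vec) (i : nat) (u : vec) : vec :=
  fun j => if in_blk sz i j then u (j - offn sz i)%nat else x j.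
Definition concat (P : nat) (sz : nat -> nat) (f : nat -> vec) : vec :=
  fun j => sumR P (fun i => if in_blk sz i j then f i (j - offn sz i)%nat else 0).

Definition in_box (n : nat) (lo hi : vec) (x : vec) : Prop :=
  forall j, (j < n)%nat -> lo j <= x j <= hi j.

Definition is_proj (n : nat) (C : vec -> Prop) (x y : vec) : Prop :=
  C y /\ forall u, C u -> norm n (vsub x y) <= norm n (vsub x u).

Record problem := {
  nP : nat;
  nb : nat -> nat;              (* n_i : size of block z_i *)
  nm : nat;                     (* m : number of coupling constraints Q_c *)
  nq : nat -> nat;
  np : nat;                     (* p : dimension of the parameter s *)
  Jb : nat -> vec -> R;
  Qc : vec -> vec;
  gb : nat -> vec -> vec;
  Tb : nat -> nat -> nat -> R;  (* T_i (q_i x p matrix): Tb i r l *)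
  lo : vec; hi : vec;           (* Z = box [lo,hi] in R^{n_z}; Z_i = its block i *)
  Sset : vec -> Prop
}.

Definition nz (pb : problem) : nat := offn (nb pb) (nP pb).
Definition qtot (pb : problem) : nat := offn (nq pb) (nP pb).
Definition nmu (pb : problem) : nat := (nm pb + qtot pb)%nat.

Definition wf_problem (pb : problem) : Prop :=
  (forall i, (i < nP pb)%nat -> is_poly (nb pb i) (Jb pb i)) /\
  (forall l, (l < nm pb)%nat -> is_poly (nz pb) (fun z => Qc pb z l)) /\
  (forall i r, (i < nP pb)%nat -> (r < nq pb i)%nat -> is_poly (nb pb i) (fun u => gb pb i u r)) /\
  (forall j, (j < nz pb)%nat -> lo pb j <= hi pb j).

Definition inZ (pb : problem) (z : vec) : Prop := in_box (nz pb) (lo pb) (hi pb) z.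
Definition inZi (pb : problem) (i : nat) (u : vec) : Prop :=
  in_box (nb pb i) (blk (nb pb) (lo pb) i) (blk (nb pb) (hi pb) i) u.
Definition inW (pb : problem) (w : pvec) : Prop := inZ pb (fst w).

Definition Jf (pb : problem) (z : vec) : R := sumR (nP pb) (fun i => Jb pb i (blk (nb pb) z i)).
(** G(z,s) = (Q_c(z), g_1(z_1)+T_1 s, ..., g_P(z_P)+T_P s) *)
Definition Gf (pb : problem) (z s : vec) : vec :=
  fun j => if Nat.ltb j (nm pb) then Qc pb z j
           else concat (nP pb) (nq pb)
                  (fun i => vadd (gb pb i (blk (nb pb) z i)) (matvec (np pb) (Tb pb i) s))
                  (j - nm pb)%nat.

(** Gradient data: [dJ z] = grad J(z); [dG l z] = grad_z G_l(z,s)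
    (the gradient of each component of G in z, independent of s). *)
Definition grad_data (pb : problem) (dJ : vec -> vec) (dG : nat -> vec -> vec) : Prop :=
  is_grad (nz pb) (Jf pb) dJ /\
  forall s l, (l < nmu pb)%nat -> is_grad (nz pb) (fun z => Gf pb z s l) (dG l).

Definition gradLag0 (pb : problem) (dJ : vec -> vec) (dG : nat -> vec -> vec) (z mu : vec) : vec :=
  fun j => dJ z j + sumR (nmu pb) (fun l => mu l * dG l z j).

Definition Fmap (pb : problem) dJ dG (w : pvec) (s : vec) : pvec :=
  (gradLag0 pb dJ dG (fst w) (snd w), Gf pb (fst w) s).

Definition Hmap (pb : problem) dJ dG (rho : R) (mut : vec) (w : pvec) (d s : vec) : pvec :=
  (gradLag0 pb dJ dG (fst w) (snd w),
   fun j => Gf pb (fst w) s j + d j + (mut j - snd w j) / rho).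

Definition normal_cone (pb : problem) (w v : pvec) : Prop :=
  inW pb w /\ forall u, inW pb u -> pdot (nz pb) (nmu pb) v (psub u w) <= 0.

Definition gen_eq (pb : problem) (Phi w : pvec) : Prop :=
  exists v, normal_cone pb w v /\
    pveq (nz pb) (nmu pb) (vadd (fst Phi) (fst v), vadd (snd Phi) (snd v)) (vzero, vzero).

Definition KKT (pb : problem) dJ dG (w : pvec) (s : vec) : Prop :=
  gen_eq pb (Fmap pb dJ dG w s) w.

Definition Lag (pb : problem) (rho : R) (z mu s : vec) : R :=
  Jf pb z + sumR (nmu pb) (fun l => (mu l + rho / 2 * Gf pb z s l) * Gf pb z s l).
Definition gradLag (pb : problem) dJ dG (rho : R) (z mu s : vec) : vec :=
  fun j => dJ z j + sumR (nmu pb) (fun l => (mu l + rho * Gf pb z s l) * dG l z j).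

Definition bt_cond (pb : problem) dJ dG (rho : R) (alpha : nat -> R)
    (mu s : vec) (i : nat) (z : vec) (c : R) (u : vec) : Prop :=
  let zi := blk (nb pb) z i in
  let gi := blk (nb pb) (gradLag pb dJ dG rho z mu s) i in
  is_proj (nb pb i) (inZi pb i) (vsub zi (vscal (/ c) gi)) u /\
  Lag pb rho (set_blk (nb pb) z i u) mu s + alpha i / 2 * (norm (nb pb i) (vsub u zi))^2
  <= Lag pb rho z mu s + dot (nb pb i) gi (vsub u zi) + c / 2 * (norm (nb pb i) (vsub u zi))^2.

Definition block_step (pb : problem) dJ dG (rho : R) (alpha c0 : nat -> R) (beta : R)
    (mu s : vec) (i : nat) (z z' : vec) : Prop :=
  exists (t : nat) (u : vec),
    bt_cond pb dJ dG rho alpha mu s i z (c0 i * beta ^ t) u /\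
    (forall t' u', (t' < t)%nat ->
        is_proj (nb pb i) (inZi pb i)
          (vsub (blk (nb pb) z i) (vscal (/ (c0 i * beta ^ t')) (blk (nb pb) (gradLag pb dJ dG rho z mu s) i))) u' ->
        ~ bt_cond pb dJ dG rho alpha mu s i z (c0 i * beta ^ t') u') /\
    veq (nz pb) z' (set_blk (nb pb) z i u).

Definition sweep (pb : problem) dJ dG rho alpha c0 beta (mu s : vec) (z z' : vec) : Prop :=
  exists zs : nat -> vec, zs O = z /\
    (forall i, (i < nP pb)%nat -> block_step pb dJ dG rho alpha c0 beta mu s i (zs i) (zs (S i))) /\
    veq (nz pb) z' (zs (nP pb)).

Definition sweeps (pb : problem) dJ dG rho alpha c0 beta (M : nat) (mu s : vec) (z z' : vec) : Prop :=
  exists zs : nat -> vec, zs O = z /\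
    (forall n, (n < M)%nat -> sweep pb dJ dG rho alpha c0 beta mu s (zs n) (zs (S n))) /\
    veq (nz pb) z' (zs M).

Definition sweeps_limit (pb : problem) dJ dG rho alpha c0 beta (mu s : vec) (z zinf : vec) : Prop :=
  exists zs : nat -> vec, zs O = z /\
    (forall n, sweep pb dJ dG rho alpha c0 beta mu s (zs n) (zs (S n))) /\
    (forall eps, eps > 0 -> exists N, forall n, (n >= N)%nat -> norm (nz pb) (vsub (zs n) zinf) < eps).

Definition lamF_of (pb : problem) (Tn : nat -> R) : R := INR (nP pb) * maxR (nP pb) Tn.

Definition d_of (rho : R) (wbar wstar : pvec) : vec := vscal (/ rho) (vsub (snd wbar) (snd wstar)).

Definition winf_of (pb : problem) (rho : R) (zinf : vec) (wbar : pvec) (s' : vec) : pvec :=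
  (zinf, vadd (snd wbar) (vscal rho (Gf pb zinf s'))).

Definition tracking_iter (pb : problem) dJ dG rho alpha c0 beta (M : nat)
    (s : nat -> vec) (wbar : nat -> pvec) : Prop :=
  forall k,
    inZ pb (fst (wbar k)) /\
    sweeps pb dJ dG rho alpha c0 beta M (snd (wbar k)) (s (S k)) (fst (wbar k)) (fst (wbar (S k))) /\
    veq (nmu pb) (snd (wbar (S k)))
        (vadd (snd (wbar k)) (vscal rho (Gf pb (fst (wbar (S k))) (s (S k))))).

(** Hypothesis (A), with w*(s) = wA k s *)
Definition hypA (pb : problem) dJ dG (s : nat -> vec) (wstar : nat -> pvec)
    (wA : nat -> vec -> pvec) (rA dA lA : R) : Prop :=
  forall k,
    (forall s', Sset pb s' -> norm (np pb) (vsub s' (s k)) < rA ->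
       pdist (nz pb) (nmu pb) (wA k s') (wstar k) < dA /\
       KKT pb dJ dG (wA k s') s' /\
       (forall w, pdist (nz pb) (nmu pb) w (wstar k) < dA -> KKT pb dJ dG w s' ->
          pveq (nz pb) (nmu pb) w (wA k s'))) /\
    (forall s1 s2, Sset pb s1 -> norm (np pb) (vsub s1 (s k)) < rA ->
                   Sset pb s2 -> norm (np pb) (vsub s2 (s k)) < rA ->
       pdist (nz pb) (nmu pb) (wA k s1) (wA k s2)
       <= lA * pdist (nz pb) (nmu pb) (Fmap pb dJ dG (wA k s2) s1) (Fmap pb dJ dG (wA k s2) s2)) /\
    (norm (np pb) (vsub (s (S k)) (s k)) < rA ->
       pveq (nz pb) (nmu pb) (wstar (S k)) (wA k (s (S k)))).

(** Hypothesis (B), with w*_k(d,s) = wB k d s *)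
Definition hypB (pb : problem) dJ dG (rho : R) (s : nat -> vec) (wstar : nat -> pvec)
    (wB : nat -> vec -> vec -> pvec) (rB qB lB dB : R) : Prop :=
  forall k,
    (forall d s', norm (nmu pb) d < qB -> Sset pb s' -> norm (np pb) (vsub s' (s k)) < rB ->
       pdist (nz pb) (nmu pb) (wB k d s') (wstar k) < dB /\
       gen_eq pb (Hmap pb dJ dG rho (snd (wstar k)) (wB k d s') d s') (wB k d s') /\
       (forall w, pdist (nz pb) (nmu pb) w (wstar k) < dB ->
          gen_eq pb (Hmap pb dJ dG rho (snd (wstar k)) w d s') w ->
          pveq (nz pb) (nmu pb) w (wB k d s'))) /\
    (forall d1 s1 d2 s2,
       norm (nmu pb) d1 < qB -> Sset pb s1 -> norm (np pb) (vsub s1 (s k)) < rB ->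
       norm (nmu pb) d2 < qB -> Sset pb s2 -> norm (np pb) (vsub s2 (s k)) < rB ->
       pdist (nz pb) (nmu pb) (wB k d1 s1) (wB k d2 s2)
       <= lB * pdist (nz pb) (nmu pb)
                 (Hmap pb dJ dG rho (snd (wstar k)) (wB k d2 s2) d1 s1)
                 (Hmap pb dJ dG rho (snd (wstar k)) (wB k d2 s2) d2 s2)).

Definition hypC (pb : problem) dJ dG rho alpha c0 beta (M : nat) (s : nat -> vec)
    (wstar wbar : nat -> pvec) (wB : nat -> vec -> vec -> pvec) (zinf : nat -> vec)
    (rB qB Cc delta psi : R) : Prop :=
  forall k,
    sweeps_limit pb dJ dG rho alpha c0 beta (snd (wbar k)) (s (S k)) (fst (wbar k)) (zinf k) /\
    (norm (nmu pb) (d_of rho (wbar k) (wstar k)) < qB ->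
     norm (np pb) (vsub (s (S k)) (s k)) < rB ->
       pveq (nz pb) (nmu pb) (winf_of pb rho (zinf k) (wbar k) (s (S k)))
            (wB k (d_of rho (wbar k) (wstar k)) (s (S k)))) /\
    (norm (nz pb) (vsub (fst (wbar k)) (zinf k)) < delta ->
       norm (nz pb) (vsub (fst (wbar (S k))) (zinf k))
       <= Cc * Rpower (INR M) (- psi) * norm (nz pb) (vsub (fst (wbar k)) (zinf k))).

(* Main.v *)
Require Import Defs.
From Stdlib Require Import Reals Lra Lia FunctionalExtensionality.
Open Scope R_scope.
Lemma sumR_ext n f g : (forall i, (i < n)%nat -> f i = g i) -> sumR n f = sumR n g.
Proof. induction n; simpl; intros; auto. rewrite IHn by (intros; apply H; lia). rewrite H by lia. reflexivity. Qed.
Lemma sumR_plus n f g : sumR n (fun i => f i + g i) = sumR n f + sumR n g.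
Proof. induction n; simpl; [ring| rewrite IHn; ring]. Qed.
Lemma sumR_minus n f g : sumR n (fun i => f i - g i) = sumR n f - sumR n g.
Proof. induction n; simpl; [ring| rewrite IHn; ring]. Qed.
Lemma sumR_scal n c f : sumR n (fun i => c * f i) = c * sumR n f.
Proof. induction n; simpl; [ring| rewrite IHn; ring]. Qed.
Lemma sumR_zero n f : (forall i, (i < n)%nat -> f i = 0) -> sumR n f = 0.
Proof. induction n; simpl; intros; auto. rewrite IHn by (intros; apply H; lia). rewrite H by lia. ring. Qed.
Lemma sumR_nonneg n f : (forall i, (i < n)%nat -> 0 <= f i) -> 0 <= sumR n f.
Proof. induction n; simpl; intros; [lra|]. assert (0 <= sumR n f) by (apply IHn; intros; apply H; lia). assert (0 <= f n) by (apply H; lia). lra. Qed.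
Lemma sumR_term n f i : (forall j, (j < n)%nat -> 0 <= f j) -> (i < n)%nat -> f i <= sumR n f.
Proof. induction n; simpl; intros; [lia|].
  destruct (Nat.eq_dec i n). subst. assert (0 <= sumR n f) by (apply sumR_nonneg; intros; apply H; lia). lra.
  assert (f i <= sumR n f) by (apply IHn; [intros; apply H; lia| lia]). assert (0 <= f n) by (apply H; lia). lra. Qed.
Lemma sumR_split n1 n2 f : sumR (n1 + n2) f = sumR n1 f + sumR n2 (fun i => f (n1 + i)%nat).
Proof. induction n2; simpl. rewrite Nat.add_0_r; ring. rewrite Nat.add_succ_r; simpl; rewrite IHn2; ring. Qed.
Lemma sumR_const_le n f c : (forall i, (i < n)%nat -> f i <= c) -> sumR n f <= INR n * c.
Proof. induction n; intros; [simpl; lra|]. change (sumR (S n) f) with (sumR n f + f n). rewrite S_INR. assert (sumR n f <= INR n * c) by (apply IHn; intros; apply H; lia).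
  assert (f n <= c) by (apply H; lia). lra. Qed.

Lemma dot_nonneg n x : 0 <= dot n x x.
Proof. apply sumR_nonneg; intros; nra. Qed.
Lemma norm_nonneg n x : 0 <= norm n x.
Proof. apply sqrt_pos. Qed.
Lemma norm_sq n x : norm n x ^ 2 = dot n x x.
Proof. unfold norm; apply pow2_sqrt, dot_nonneg. Qed.
Lemma norm_ext n x y : (forall i, (i < n)%nat -> x i = y i) -> norm n x = norm n y.
Proof. intros; unfold norm, dot; f_equal; apply sumR_ext; intros; rewrite H; auto. Qed.
Lemma norm_scal n a x : norm n (vscal a x) = Rabs a * norm n x.
Proof. unfold norm, dot, vscal.
  rewrite (sumR_ext _ _ (fun i => (a*a) * (x i * x i))) by (intros; ring).
  rewrite sumR_scal, sqrt_mult_alt by nra. rewrite <- sqrt_Rsqr_abs. reflexivity. Qed.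
Lemma norm_vzero n : norm n vzero = 0.
Proof. unfold norm, dot, vzero. rewrite sumR_zero by (intros; ring). apply sqrt_0. Qed.
Lemma norm_self n x : norm n (vsub x x) = 0.
Proof. rewrite <- (norm_vzero n). apply norm_ext; intros; unfold vsub, vzero; ring. Qed.
Lemma norm_sub_sym n x y : norm n (vsub x y) = norm n (vsub y x).
Proof. unfold norm, dot; f_equal; apply sumR_ext; intros; unfold vsub; ring. Qed.

Lemma quad_lemma a b c : (forall t, 0 <= a - 2*t*b + t*t*c) -> 0 <= c -> b*b <= a*c.
Proof. intros H Hc. assert (Ha := H 0).
  destruct (Rle_lt_or_eq_dec 0 c Hc) as [Hc'|Hc'].
  - specialize (H (b/c)).
    replace (a - 2 * (b / c) * b + b / c * (b / c) * c) with (a - b*b/c) in H by (field; lra).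
    assert (0 <= c * (a - b*b/c)) by (apply Rmult_le_pos; lra).
    replace (c * (a - b*b/c)) with (a*c - b*b) in H0 by (field; lra). lra.
  - subst c. destruct (Req_dec b 0). subst; nra.
    specialize (H ((a+1)/(2*b))).
    replace (a - 2 * ((a + 1) / (2 * b)) * b + (a + 1) / (2 * b) * ((a + 1) / (2 * b)) * 0) with (-1) in H by (field; auto). lra.
Qed.

Lemma dot_expand n x y t : dot n (vsub x (vscal t y)) (vsub x (vscal t y)) = dot n x x - 2*t*dot n x y + t*t*dot n y y.
Proof. unfold dot.
  rewrite (sumR_ext _ _ (fun i => (x i * x i + (-2*t) * (x i * y i)) + (t*t) * (y i*y i))) by (intros; unfold vsub, vscal; ring).
  rewrite !sumR_plus, !sumR_scal; ring. Qed.

Lemma CS n x y : dot n x y <= norm n x * norm n y.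
Proof.
  assert (H : dot n x y * dot n x y <= dot n x x * dot n y y).
  { apply quad_lemma; [intros t; rewrite <- dot_expand; apply dot_nonneg | apply dot_nonneg]. }
  unfold norm. rewrite <- sqrt_mult_alt by apply dot_nonneg.
  apply Rle_trans with (sqrt (dot n x y * dot n x y)).
  change (dot n x y * dot n x y) with (Rsqr (dot n x y)); rewrite sqrt_Rsqr_abs; apply Rle_abs.
  apply sqrt_le_1_alt; exact H.
Qed.

Lemma norm_add n x y : norm n (vadd x y) <= norm n x + norm n y.
Proof.
  assert (Hd : dot n (vadd x y) (vadd x y) = dot n x x + 2 * dot n x y + dot n y y).
  { unfold dot. rewrite (sumR_ext _ _ (fun i => (x i * x i + 2 * (x i * y i)) + y i * y i)) by (intros; unfold vadd; ring).
    rewrite !sumR_plus, sumR_scal; ring. }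
  assert (H := CS n x y). assert (Hx := norm_sq n x). assert (Hy := norm_sq n y).
  assert (0 <= norm n x) by apply norm_nonneg. assert (0 <= norm n y) by apply norm_nonneg.
  unfold norm at 1. rewrite Hd.
  rewrite <- (sqrt_pow2 (norm n x + norm n y)) by lra.
  apply sqrt_le_1_alt. rewrite <- Hx, <- Hy. nra.
Qed.
Lemma norm_tri n x y z : norm n (vsub x z) <= norm n (vsub x y) + norm n (vsub y z).
Proof. rewrite (norm_ext n (vsub x z) (vadd (vsub x y) (vsub y z))) by (intros; unfold vadd, vsub; ring). apply norm_add. Qed.

Lemma pdist_eq n1 n2 x y : pdist n1 n2 x y = sqrt (norm n1 (vsub (fst x) (fst y)) ^ 2 + norm n2 (vsub (snd x) (snd y)) ^ 2).
Proof. unfold pdist, pnorm, pdot, psub; cbn [fst snd]; rewrite !norm_sq; reflexivity. Qed.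
Lemma sqrt2_le A B C D : 0 <= A <= B -> 0 <= C <= D -> sqrt (A^2 + C^2) <= sqrt (B^2 + D^2).
Proof. intros; apply sqrt_le_1_alt; nra. Qed.
Lemma mink a b c d : 0 <= a -> 0 <= b -> 0 <= c -> 0 <= d ->
  sqrt ((a+b)^2 + (c+d)^2) <= sqrt (a^2 + c^2) + sqrt (b^2 + d^2).
Proof. intros.
  assert (HP := pow2_sqrt (a^2 + c^2) ltac:(nra)). assert (HQ := pow2_sqrt (b^2 + d^2) ltac:(nra)).
  assert (0 <= sqrt (a^2+c^2)) by apply sqrt_pos. assert (0 <= sqrt (b^2+d^2)) by apply sqrt_pos.
  assert (HPQ : a*b + c*d <= sqrt (a^2+c^2) * sqrt (b^2+d^2)).
  { rewrite <- sqrt_mult_alt by nra. apply Rle_trans with (sqrt ((a*b+c*d)^2)).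
    rewrite sqrt_pow2 by nra; lra. apply sqrt_le_1_alt. replace ((a^2+c^2)*(b^2+d^2)) with ((a*b+c*d)^2 + (a*d-b*c)^2) by ring. assert (0 <= (a*d - b*c)^2) by apply pow2_ge_0. lra. }
  apply Rle_trans with (sqrt ((sqrt (a^2+c^2) + sqrt (b^2+d^2))^2)).
  apply sqrt_le_1_alt.
  replace ((sqrt (a^2+c^2) + sqrt (b^2+d^2))^2) with (sqrt (a^2+c^2)^2 + sqrt (b^2+d^2)^2 + 2 * (sqrt (a^2+c^2) * sqrt (b^2+d^2))) by ring.
  rewrite HP, HQ. nra. rewrite sqrt_pow2 by lra; lra.
Qed.
Lemma pdist_tri n1 n2 x y z : pdist n1 n2 x z <= pdist n1 n2 x y + pdist n1 n2 y z.
Proof. rewrite !pdist_eq. eapply Rle_trans. apply sqrt2_le.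
  split; [apply norm_nonneg| apply (norm_tri n1 _ (fst y))].
  split; [apply norm_nonneg| apply (norm_tri n2 _ (snd y))].
  apply mink; apply norm_nonneg. Qed.
Lemma pdist_sym n1 n2 x y : pdist n1 n2 x y = pdist n1 n2 y x.
Proof. rewrite !pdist_eq. rewrite (norm_sub_sym n1), (norm_sub_sym n2). reflexivity. Qed.
Lemma pdist_nonneg n1 n2 x y : 0 <= pdist n1 n2 x y.
Proof. apply sqrt_pos. Qed.
Lemma pdist_le_sum n1 n2 x y : pdist n1 n2 x y <= norm n1 (vsub (fst x) (fst y)) + norm n2 (vsub (snd x) (snd y)).
Proof. rewrite pdist_eq. assert (H1 := norm_nonneg n1 (vsub (fst x) (fst y))). assert (H2 := norm_nonneg n2 (vsub (snd x) (snd y))).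
  rewrite <- (sqrt_pow2 (norm n1 (vsub (fst x) (fst y)) + norm n2 (vsub (snd x) (snd y)))) by lra. apply sqrt_le_1_alt.
  assert (0 <= norm n1 (vsub (fst x) (fst y)) * norm n2 (vsub (snd x) (snd y))) by (apply Rmult_le_pos; auto). nra. Qed.
Lemma fst_le_pdist n1 n2 x y : norm n1 (vsub (fst x) (fst y)) <= pdist n1 n2 x y.
Proof. rewrite pdist_eq. assert (H1 := norm_nonneg n1 (vsub (fst x) (fst y))). 
  rewrite <- (sqrt_pow2 (norm n1 _)) at 1 by lra. apply sqrt_le_1_alt. assert (H2 := pow2_ge_0 (norm n2 (vsub (snd x) (snd y)))). lra. Qed.
Lemma snd_le_pdist n1 n2 x y : norm n2 (vsub (snd x) (snd y)) <= pdist n1 n2 x y.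
Proof. rewrite pdist_eq. assert (H1 := norm_nonneg n2 (vsub (snd x) (snd y))). 
  rewrite <- (sqrt_pow2 (norm n2 _)) at 1 by lra. apply sqrt_le_1_alt. assert (H2 := pow2_ge_0 (norm n1 (vsub (fst x) (fst y)))). lra. Qed.
Lemma pdist_pveq n1 n2 x x' y y' : pveq n1 n2 x x' -> pveq n1 n2 y y' -> pdist n1 n2 x y = pdist n1 n2 x' y'.
Proof. intros [Hx1 Hx2] [Hy1 Hy2]. rewrite !pdist_eq.
  rewrite (norm_ext n1 (vsub (fst x) (fst y)) (vsub (fst x') (fst y'))) by (intros; unfold vsub; rewrite Hx1, Hy1; auto).
  rewrite (norm_ext n2 (vsub (snd x) (snd y)) (vsub (snd x') (snd y'))) by (intros; unfold vsub; rewrite Hx2, Hy2; auto).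
  reflexivity. Qed.
Lemma pdist_self n1 n2 x : pdist n1 n2 x x = 0.
Proof. rewrite pdist_eq, !norm_self. replace (0^2+0^2) with 0 by ring. apply sqrt_0. Qed.
Lemma pveq_refl n1 n2 x : pveq n1 n2 x x.
Proof. split; intros i _; reflexivity. Qed.

Lemma matvec_scal c T a x r : matvec c T (vscal a x) r = a * matvec c T x r.
Proof. unfold matvec. rewrite <- sumR_scal. apply sumR_ext; intros; unfold vscal; ring. Qed.

Lemma opnorm_nonneg r c T a : is_opnorm r c T a -> 0 <= a.
Proof. intros [Hub _]. apply Rle_trans with (norm r (matvec c T vzero)); [apply norm_nonneg|].
  apply Hub. exists vzero. split; [rewrite norm_vzero; lra| reflexivity]. Qed.

Lemma opnorm_bound r c T a x : is_opnorm r c T a -> norm r (matvec c T x) <= a * norm c x.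
Proof. intros Hop. assert (Ha := opnorm_nonneg _ _ _ _ Hop). destruct Hop as [Hub _].
  destruct (Req_dec (norm c x) 0) as [H0|H0].
  - assert (Hd : dot c x x = 0) by (apply sqrt_eq_0; [apply dot_nonneg| exact H0]).
    assert (Hx : forall i, (i < c)%nat -> x i = 0).
    { intros i Hi. assert (x i * x i <= dot c x x) by (apply (sumR_term c (fun i => x i * x i)); [intros; nra| auto]). nra. }
    rewrite (norm_ext r _ vzero), norm_vzero, H0. lra.
    intros i _. unfold matvec, vzero. apply sumR_zero. intros l Hl. rewrite Hx by auto. ring.
  - assert (HN : 0 < norm c x) by (assert (H := norm_nonneg c x); lra).
    assert (Hb : norm r (matvec c T (vscal (/ norm c x) x)) <= a).
    { apply Hub. exists (vscal (/ norm c x) x). split; [|reflexivity].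
      rewrite norm_scal, Rabs_right by (left; apply Rinv_0_lt_compat; auto). right; field; lra. }
    rewrite (norm_ext r _ (vscal (/ norm c x) (matvec c T x))) in Hb by (intros; unfold vscal; apply matvec_scal).
    rewrite norm_scal, Rabs_right in Hb by (left; apply Rinv_0_lt_compat; auto).
    apply Rmult_le_compat_l with (r := norm c x) in Hb; [|lra].
    replace (norm c x * (/ norm c x * norm r (matvec c T x))) with (norm r (matvec c T x)) in Hb by (field; lra). lra.
Qed.

Lemma maxR_nonneg n f : 0 <= maxR n f.
Proof. induction n; simpl; [lra|]. eapply Rle_trans; [exact IHn| apply Rmax_l]. Qed.
Lemma maxR_ge n f i : (i < n)%nat -> f i <= maxR n f.
Proof. induction n; simpl; intros; [lia|]. destruct (Nat.eq_dec i n). subst; apply Rmax_r.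
  eapply Rle_trans; [apply IHn; lia| apply Rmax_l]. Qed.

Lemma offn_mono sz a b : (a <= b)%nat -> (offn sz a <= offn sz b)%nat.
Proof. induction b; intros. assert (a = 0%nat) by lia; subst; lia.
  destruct (Nat.eq_dec a (S b)). subst; lia. simpl. assert (offn sz a <= offn sz b)%nat by (apply IHb; lia). lia. Qed.

Lemma concat_S P sz h j : concat (S P) sz h j = concat P sz h j + (if in_blk sz P j then h P (j - offn sz P)%nat else 0).
Proof. reflexivity. Qed.

Lemma concat_sq P sz h : sumR (offn sz P) (fun j => concat P sz h j * concat P sz h j) = sumR P (fun b => dot (sz b) (h b) (h b)).
Proof. induction P. reflexivity.
  change (offn sz (S P)) with (offn sz P + sz P)%nat. rewrite sumR_split.
  change (sumR (S P) (fun b => dot (sz b) (h b) (h b))) with (sumR P (fun b => dot (sz b) (h b) (h b)) + dot (sz P) (h P) (h P)).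
  rewrite <- IHP. f_equal.
  - apply sumR_ext. intros j Hj. rewrite concat_S.
    unfold in_blk. replace (Nat.leb (offn sz P) j) with false by (symmetry; apply Nat.leb_gt; lia). simpl. ring.
  - unfold dot. apply sumR_ext. intros i Hi. rewrite concat_S.
    assert (Hz : concat P sz h (offn sz P + i)%nat = 0).
    { unfold concat. apply sumR_zero. intros b Hb. unfold in_blk.
      assert (offn sz (S b) <= offn sz P)%nat by (apply offn_mono; lia). simpl in H.
      replace (Nat.ltb (offn sz P + i) (offn sz (S b))) with false by (symmetry; apply Nat.ltb_ge; simpl; lia).
      rewrite Bool.andb_false_r. reflexivity. }
    rewrite Hz. unfold in_blk.
    replace (Nat.leb (offn sz P) (offn sz P + i)) with true by (symmetry; apply Nat.leb_le; lia).
    replace (Nat.ltb (offn sz P + i) (offn sz (S P))) with true by (symmetry; apply Nat.ltb_lt; simpl; lia).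
    replace (offn sz P + i - offn sz P)%nat with i by lia. simpl. ring.
Qed.

Lemma G_lip_s pb Tn z s1 s0 :
  (forall i, (i < nP pb)%nat -> is_opnorm (nq pb i) (np pb) (Tb pb i) (Tn i)) ->
  norm (nmu pb) (vsub (Gf pb z s1) (Gf pb z s0)) <= lamF_of pb Tn * norm (np pb) (vsub s1 s0).
Proof. intros HT.
  set (ds := vsub s1 s0). set (h := fun b => matvec (np pb) (Tb pb b) ds).
  assert (Hd : dot (nmu pb) (vsub (Gf pb z s1) (Gf pb z s0)) (vsub (Gf pb z s1) (Gf pb z s0))
               = sumR (nP pb) (fun b => dot (nq pb b) (h b) (h b))).
  { unfold dot at 1, nmu. rewrite sumR_split.
    rewrite (sumR_zero (nm pb)).
    2:{ intros j Hj. unfold Gf, vsub. rewrite (proj2 (Nat.ltb_lt _ _) Hj). ring. }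
    rewrite Rplus_0_l. unfold qtot. rewrite <- (concat_sq (nP pb) (nq pb) h).
    apply sumR_ext. intros i Hi.
    assert (E : vsub (Gf pb z s1) (Gf pb z s0) (nm pb + i)%nat = concat (nP pb) (nq pb) h i).
    { unfold Gf, vsub. replace (Nat.ltb (nm pb + i) (nm pb)) with false by (symmetry; apply Nat.ltb_ge; lia).
      replace (nm pb + i - nm pb)%nat with i by lia.
      unfold concat. rewrite <- sumR_minus. apply sumR_ext. intros b Hb.
      destruct (in_blk (nq pb) b i); [|ring].
      unfold vadd, h, matvec, ds, vsub.
      rewrite (sumR_ext _ (fun l => Tb pb b (i - offn (nq pb) b)%nat l * (s1 l - s0 l))
                 (fun l => Tb pb b (i - offn (nq pb) b)%nat l * s1 l - Tb pb b (i - offn (nq pb) b)%nat l * s0 l)) by (intros; ring).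
      rewrite sumR_minus. ring. }
    rewrite E. reflexivity. }
  set (mx := maxR (nP pb) Tn). set (sg := norm (np pb) ds).
  assert (Hmx : 0 <= mx) by apply maxR_nonneg. assert (Hsg : 0 <= sg) by apply norm_nonneg.
  assert (Hb : forall b, (b < nP pb)%nat -> dot (nq pb b) (h b) (h b) <= (mx * sg)^2).
  { intros b Hb. rewrite <- norm_sq. assert (H1 := opnorm_bound _ _ _ _ ds (HT b Hb)).
    assert (H2 := opnorm_nonneg _ _ _ _ (HT b Hb)). assert (H3 : Tn b <= mx) by (apply maxR_ge; auto).
    assert (H4 := norm_nonneg (nq pb b) (h b)). unfold h.
    assert (norm (nq pb b) (matvec (np pb) (Tb pb b) ds) <= mx * sg).
    { eapply Rle_trans; [exact H1|]. apply Rmult_le_compat_r; auto. }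
    unfold h in H4. nra. }
  unfold norm at 1. rewrite Hd. unfold lamF_of. fold mx. fold ds. fold sg.
  assert (HP : INR (nP pb) * (mx * sg)^2 <= (INR (nP pb) * mx * sg)^2).
  { destruct (nP pb) as [|P]. simpl. lra.
    assert (1 <= INR (S P)) by (apply (le_INR 1); lia). assert (0 <= (mx*sg)^2) by apply pow2_ge_0.
    replace ((INR (S P) * mx * sg)^2) with (INR (S P) * INR (S P) * (mx*sg)^2) by ring. nra. }
  rewrite <- (sqrt_pow2 (INR (nP pb) * mx * sg)).
  2:{ apply Rmult_le_pos; auto. apply Rmult_le_pos; auto. apply pos_INR. }
  apply sqrt_le_1_alt. eapply Rle_trans; [apply sumR_const_le; exact Hb| exact HP].
Qed.

Theorem mainTheorem10
  (pb : problem) (Hwf : wf_problem pb)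
  (dJ : vec -> vec) (dG : nat -> vec -> vec) (Hgrad : grad_data pb dJ dG)
  (alpha c0 : nat -> R) (beta : R)
  (Halpha : forall i, (i < nP pb)%nat -> alpha i > 0)
  (Hc0 : forall i, (i < nP pb)%nat -> c0 i > 0) (Hbeta : beta > 1)
  (rho : R) (Hrho : rho > 0) (M : nat) (HM : (1 <= M)%nat)
  (* lambda_F = P max_i ||T_i||_2 *)
  (Tn : nat -> R)
  (HTn : forall i, (i < nP pb)%nat -> is_opnorm (nq pb i) (np pb) (Tb pb i) (Tn i))
  (* lambda_H *)
  (lH : R) (HlH : lH > 0)
  (HH : forall mut w d s d' s',
      pdist (nz pb) (nmu pb) (Hmap pb dJ dG rho mut w d s) (Hmap pb dJ dG rho mut w d' s')
      <= lH * pdist (nmu pb) (np pb) (d, s) (d', s'))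
  (* lambda_G *)
  (lG : R) (HlG : lG > 0)
  (HG : forall s z z', inZ pb z -> inZ pb z' ->
      norm (nmu pb) (vsub (Gf pb z s) (Gf pb z' s)) <= lG * norm (nz pb) (vsub z z'))
  (* tracking setting *)
  (s : nat -> vec) (HS : forall k, Sset pb (s k))
  (wstar : nat -> pvec) (Hwstar : forall k, KKT pb dJ dG (wstar k) (s k))
  (wbar : nat -> pvec) (Hiter : tracking_iter pb dJ dG rho alpha c0 beta M s wbar)
  (zinf : nat -> vec)
  (* standing hypotheses (A), (B), (C) *)
  (rA dA lA : R) (HrA : rA > 0) (HdA : dA > 0) (HlA : lA > 0)
  (wA : nat -> vec -> pvec) (HA : hypA pb dJ dG s wstar wA rA dA lA)
  (rB qB lB dB : R) (HrB : rB > 0) (HqB : qB > 0) (HlB : lB > 0) (HdB : dB >= dA)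
  (wB : nat -> vec -> vec -> pvec) (HB : hypB pb dJ dG rho s wstar wB rB qB lB dB)
  (Cc delta psi : R) (HCc : Cc > 0) (Hdelta : delta > 0) (Hpsi : psi > 0)
  (HC : hypC pb dJ dG rho alpha c0 beta M s wstar wbar wB zinf rB qB Cc delta psi)
  (k : nat)
  (* (i) ||s_{k+1}-s_k|| < min{r_A, r_B, q_B rho/(lambda_A lambda_F)} *)
  (Hi : norm (np pb) (vsub (s (S k)) (s k)) < rA /\
        norm (np pb) (vsub (s (S k)) (s k)) < rB /\
        lA * lamF_of pb Tn * norm (np pb) (vsub (s (S k)) (s k)) < qB * rho)
  (* (ii) *)
  (Hii : pdist (nz pb) (nmu pb) (wbar k) (wstar k) < qB * rho)
  (* (iii) *)
  (Hiii : (1 + lH * lB / rho) * pdist (nz pb) (nmu pb) (wbar k) (wstar k)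
          + lH * lB * norm (np pb) (vsub (s (S k)) (s k)) < delta) :
  pdist (nz pb) (nmu pb) (wbar (S k)) (wstar (S k))
  <= (Cc * (1 + rho * lG) * (1 + lB * lH / rho) * Rpower (INR M) (- psi) + lB * lH / rho)
       * pdist (nz pb) (nmu pb) (wbar k) (wstar k)
   + (Cc * (1 + rho * lG) * lB * lH * Rpower (INR M) (- psi)
       + lB * lH * lA * lamF_of pb Tn / rho)
       * norm (np pb) (vsub (s (S k)) (s k)).
Proof.
  set (e := pdist (nz pb) (nmu pb) (wbar k) (wstar k)) in *.
  set (sig := norm (np pb) (vsub (s (S k)) (s k))) in *.
  set (mm := Rpower (INR M) (- psi)) in *.
  set (lF := lamF_of pb Tn) in *.
  destruct Hi as [HiA [HiB HiF]].
  assert (He : 0 <= e) by apply pdist_nonneg. assert (Hs : 0 <= sig) by apply norm_nonneg.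
  assert (Hmm : 0 <= mm) by (unfold mm, Rpower; left; apply exp_pos).
  assert (Hri : 0 < / rho) by (apply Rinv_0_lt_compat; lra).
  destruct (HA k) as [HA1 [HA2 HA3]].
  destruct (HB k) as [HB1 HB2].
  destruct (HC k) as [HC1 [HC2 HC3]].
  assert (HBL : forall d1 s1 d2 s2, norm (nmu pb) d1 < qB -> Sset pb s1 -> norm (np pb) (vsub s1 (s k)) < rB ->
       norm (nmu pb) d2 < qB -> Sset pb s2 -> norm (np pb) (vsub s2 (s k)) < rB ->
       pdist (nz pb) (nmu pb) (wB k d1 s1) (wB k d2 s2) <= lB * lH * (norm (nmu pb) (vsub d1 d2) + norm (np pb) (vsub s1 s2))).
  { intros. eapply Rle_trans. apply HB2; auto. rewrite Rmult_assoc. apply Rmult_le_compat_l; [lra|].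
    eapply Rle_trans. apply HH. apply Rmult_le_compat_l; [lra|]. apply (pdist_le_sum (nmu pb) (np pb) (d1,s1) (d2,s2)). }
  assert (H0k : norm (np pb) (vsub (s k) (s k)) = 0) by apply norm_self.
  assert (F0 : pveq (nz pb) (nmu pb) (wstar k) (wB k vzero (s k))).
  { apply (proj2 (proj2 (HB1 vzero (s k) ltac:(rewrite norm_vzero; lra) (HS k) ltac:(lra)))).
    rewrite pdist_self; lra.
    replace (Hmap pb dJ dG rho (snd (wstar k)) (wstar k) vzero (s k)) with (Fmap pb dJ dG (wstar k) (s k)).
    apply Hwstar. unfold Hmap, Fmap. f_equal. extensionality j. unfold vzero, Rdiv. ring. }
  assert (F1 : pveq (nz pb) (nmu pb) (wstar k) (wA k (s k))).
  { apply (proj2 (proj2 (HA1 (s k) (HS k) ltac:(lra)))). rewrite pdist_self; lra. apply Hwstar. }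
  assert (F2 := HA3 HiA).
  assert (Dst : pdist (nz pb) (nmu pb) (wstar (S k)) (wstar k) <= lA * lF * sig).
  { rewrite (pdist_pveq _ _ _ _ _ _ F2 F1). eapply Rle_trans. apply HA2; auto; lra.
    rewrite Rmult_assoc. apply Rmult_le_compat_l; [lra|].
    eapply Rle_trans. apply pdist_le_sum. unfold Fmap; cbn [fst snd]. rewrite norm_self, Rplus_0_l. apply G_lip_s; auto. }
  set (d' := d_of rho (wstar (S k)) (wstar k)).
  assert (Hnd' : norm (nmu pb) d' <= /rho * (lA*lF*sig)).
  { unfold d', d_of. rewrite norm_scal, Rabs_right by lra.
    apply Rmult_le_compat_l; [lra|]. eapply Rle_trans; [apply (snd_le_pdist (nz pb))| exact Dst]. }
  assert (Hd'q : norm (nmu pb) d' < qB).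
  { apply Rle_lt_trans with (/rho*(lA*lF*sig)); auto. apply Rmult_lt_reg_l with rho; auto.
    rewrite <- Rmult_assoc, Rinv_r, Rmult_1_l; lra. }
  assert (F5 : pveq (nz pb) (nmu pb) (wstar (S k)) (wB k d' (s (S k)))).
  { apply (proj2 (proj2 (HB1 d' (s (S k)) Hd'q (HS (S k)) HiB))).
    - rewrite (pdist_pveq _ _ _ _ (wstar k) (wstar k) F2 (pveq_refl _ _ _)).
      destruct (HA1 (s (S k)) (HS (S k)) HiA) as [Hlt _]. lra.
    - replace (Hmap pb dJ dG rho (snd (wstar k)) (wstar (S k)) d' (s (S k))) with (Fmap pb dJ dG (wstar (S k)) (s (S k))).
      apply Hwstar.
      unfold Hmap, Fmap, d', d_of, vscal, vsub. f_equal. extensionality j. field. lra. }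
  set (d := d_of rho (wbar k) (wstar k)).
  assert (Hnd : norm (nmu pb) d <= /rho * e).
  { unfold d, d_of. rewrite norm_scal, Rabs_right by lra.
    apply Rmult_le_compat_l; [lra|]. apply (snd_le_pdist (nz pb)). }
  assert (Hdq : norm (nmu pb) d < qB).
  { apply Rle_lt_trans with (/rho*e); auto. apply Rmult_lt_reg_l with rho; auto.
    rewrite <- Rmult_assoc, Rinv_r, Rmult_1_l; lra. }
  assert (F7 := HC2 Hdq HiB).
  set (winf := winf_of pb rho (zinf k) (wbar k) (s (S k))) in *.
  assert (E1 : pdist (nz pb) (nmu pb) winf (wstar k) <= lB * lH * (/rho * e + sig)).
  { rewrite (pdist_pveq _ _ _ _ _ _ F7 F0). eapply Rle_trans. apply HBL; auto. rewrite norm_vzero; lra. lra.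
    rewrite (norm_ext _ (vsub d vzero) d) by (intros; unfold vsub, vzero; ring).
    apply Rmult_le_compat_l; [left; apply Rmult_lt_0_compat; lra|]. fold sig. lra. }
  assert (E2 : pdist (nz pb) (nmu pb) winf (wstar (S k)) <= lB * lH * (/rho * (e + lA*lF*sig))).
  { rewrite (pdist_pveq _ _ _ _ _ _ F7 F5). eapply Rle_trans. apply HBL; auto.
    rewrite norm_self, Rplus_0_r. apply Rmult_le_compat_l; [left; apply Rmult_lt_0_compat; lra|].
    rewrite (norm_ext _ (vsub d d') (vscal (/rho) (vsub (snd (wbar k)) (snd (wstar (S k))))))
      by (intros; unfold d, d', d_of, vsub, vscal; field; lra).
    rewrite norm_scal, Rabs_right by lra. apply Rmult_le_compat_l; [lra|].
    eapply Rle_trans. apply (norm_tri _ _ (snd (wstar k))).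
    rewrite (norm_sub_sym _ (snd (wstar k))).
    assert (norm (nmu pb) (vsub (snd (wbar k)) (snd (wstar k))) <= e) by apply (snd_le_pdist (nz pb)).
    assert (norm (nmu pb) (vsub (snd (wstar (S k))) (snd (wstar k))) <= lA*lF*sig)
      by (eapply Rle_trans; [apply (snd_le_pdist (nz pb)) | exact Dst]). lra. }
  assert (HzZ : inZ pb (zinf k)).
  { destruct (proj1 (proj2 (HB1 d (s (S k)) Hdq (HS (S k)) HiB))) as [v [[HW _] _]].
    pose proof F7 as [F7a _]. unfold winf, winf_of in F7a; cbn [fst] in F7a.
    unfold inW, inZ, in_box in HW. intros j Hj. rewrite F7a by auto. apply HW; auto. }
  assert (Hwe : norm (nz pb) (vsub (fst (wbar k)) (zinf k)) <= e + lB * lH * (/rho * e + sig)).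
  { apply Rle_trans with (pdist (nz pb) (nmu pb) (wbar k) winf). apply (fst_le_pdist _ (nmu pb) (wbar k) winf).
    eapply Rle_trans. apply (pdist_tri _ _ _ (wstar k)). rewrite (pdist_sym _ _ (wstar k)). fold e. lra. }
  assert (Hz : norm (nz pb) (vsub (fst (wbar k)) (zinf k)) < delta).
  { assert (Eq : e + lB * lH * (/rho * e + sig) = (1 + lH*lB/rho)*e + lH*lB*sig) by (field; lra). lra. }
  set (a := norm (nz pb) (vsub (fst (wbar (S k))) (zinf k))).
  assert (Ha : a <= Cc * mm * (e + lB * lH * (/rho*e+sig))).
  { eapply Rle_trans. apply HC3; auto. apply Rmult_le_compat_l. apply Rmult_le_pos; lra. exact Hwe. }
  assert (X : pdist (nz pb) (nmu pb) (wbar (S k)) winf <= (1 + rho*lG) * a).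
  { eapply Rle_trans. apply pdist_le_sum. unfold winf, winf_of; cbn [fst snd]. fold a.
    destruct (Hiter k) as [_ [_ Hmu]]. destruct (Hiter (S k)) as [HZ1 _].
    rewrite (norm_ext _ _ (vscal rho (vsub (Gf pb (fst (wbar (S k))) (s (S k))) (Gf pb (zinf k) (s (S k)))))).
    2:{ intros i Hi. unfold vsub at 1. rewrite Hmu by auto. unfold vsub, vadd, vscal. ring. }
    rewrite norm_scal, Rabs_right by lra. assert (HGl := HG (s (S k)) _ _ HZ1 HzZ). fold a in HGl.
    assert (0 <= a) by apply norm_nonneg. nra. }
  eapply Rle_trans. apply (pdist_tri _ _ _ winf).
  assert (Xb : pdist (nz pb) (nmu pb) (wbar (S k)) winf <= (1+rho*lG)*(Cc*mm*(e + lB*lH*(/rho*e+sig)))).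
  { eapply Rle_trans; [exact X| apply Rmult_le_compat_l; nra]. }
  match goal with |- _ <= ?r => replace r with
    ((1+rho*lG)*(Cc*mm*(e + lB*lH*(/rho*e+sig))) + lB*lH*(/rho*(e+lA*lF*sig))) by (field; lra) end.
  lra.
Qed.
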